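(* Let $G$ be the discrete Heisenberg group of upper unitriangular $3\times3$ integer matrices $\begin{pmatrix}1&a&b\\0&1&c\\0&0&1\end{pmatrix}$, $a,b,c\in\mathbb Z$, and let $A$ be its center $\{a=c=0\}$, identified with $\mathbb Z$ via the entry $b$. Let $d(b_1,b_2)=|b_1-b_2|$ on $A$. Then there is no left invariant metric $\underline d$ on $G$ with $\underline d|_A=d$ (in particular no two-sided invariant one). *)

(* Defs.v *)
From Stdlib Require Import Reals ZArith.
Open Scope R_scope.

(* The element  [[1,a,b],[0,1,c],[0,0,1]]  of the discrete Heisenberg group,
   recorded by its three free entries a, b, c. *)
Record heis := Heis { h_a : Z; h_b : Z; h_c : Z }.

(* Matrix product of two upper unitriangular 3x3 integer matrices:
   [[1,a,b],[0,1,c],[0,0,1]] * [[1,a',b'],[0,1,c'],[0,0,1]]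
   = [[1,a+a',b'+a*c'+b],[0,1,c+c'],[0,0,1]]. *)
Definition heis_mul (x y : heis) : heis :=
  Heis (h_a x + h_a y)%Z (h_b y + h_a x * h_c y + h_b x)%Z (h_c x + h_c y)%Z.

Definition center_elt (b : Z) : heis := Heis 0%Z b 0%Z.

Definition is_metric {T : Type} (d : T -> T -> R) : Prop :=
  (forall x y, 0 <= d x y) /\
  (forall x y, d x y = 0 <-> x = y) /\
  (forall x y, d x y = d y x) /\
  (forall x y z, d x z <= d x y + d y z).

Definition left_invariant (d : heis -> heis -> R) : Prop :=
  forall g x y, d (heis_mul g x) (heis_mul g y) = d x y.

(* Main.v *)
Require Import Defs.
From Stdlib Require Import Reals ZArith Lia Lra.
Open Scope R_scope.

Theorem mainTheorem9 :
  ~ (exists d : heis -> heis -> R,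
       is_metric d /\ left_invariant d /\
       (forall b1 b2 : Z, d (center_elt b1) (center_elt b2) = Rabs (IZR (b1 - b2)))).
Proof.
  intros [d [[Hpos [Hz [Hs Ht]]] [Hl Hc]]].
  set (e := Heis 0 0 0).
  set (N := fun g => d e g).
  assert (He : forall g, heis_mul g e = g).
  { intros [a b c]; unfold heis_mul, e; simpl; f_equal; ring. }
  assert (Nmul : forall g h, N (heis_mul g h) <= N g + N h).
  { intros g h; unfold N.
    eapply Rle_trans; [apply (Ht _ g)|].
    rewrite <- (Hl g e h), He. lra. }
  assert (Xpow : forall n : nat, N (Heis (Z.of_nat n) 0 0) <= INR n * N (Heis 1 0 0)).
  { induction n.
    - simpl. unfold N. replace (Heis 0 0 0) with e by reflexivity.
      assert (d e e = 0) by (apply Hz; reflexivity). lra.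
    - replace (Heis (Z.of_nat (S n)) 0 0) with (heis_mul (Heis (Z.of_nat n) 0 0) (Heis 1 0 0))
        by (unfold heis_mul; simpl; f_equal; lia).
      rewrite S_INR. specialize (Nmul (Heis (Z.of_nat n) 0 0) (Heis 1 0 0)). lra. }
  assert (Ypow : forall n : nat, N (Heis 0 0 (Z.of_nat n)) <= INR n * N (Heis 0 0 1)).
  { induction n.
    - simpl. unfold N. replace (Heis 0 0 0) with e by reflexivity.
      assert (d e e = 0) by (apply Hz; reflexivity). lra.
    - replace (Heis 0 0 (Z.of_nat (S n))) with (heis_mul (Heis 0 0 (Z.of_nat n)) (Heis 0 0 1))
        by (unfold heis_mul; simpl; f_equal; lia).
      rewrite S_INR. specialize (Nmul (Heis 0 0 (Z.of_nat n)) (Heis 0 0 1)). lra. }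
  assert (Ninv : forall g h, heis_mul g h = e -> N h = N g).
  { intros g h Hgh. unfold N. rewrite <- (Hl g e h), He, Hgh. apply Hs. }
  set (A := N (Heis 1 0 0)). set (B := N (Heis 0 0 1)).
  assert (key : forall n : nat, INR n * INR n <= 2 * INR n * (A + B)).
  { intros n. set (z := Z.of_nat n).
    assert (Hcomm : Heis 0 (z*z) 0 =
      heis_mul (heis_mul (heis_mul (Heis z 0 0) (Heis 0 0 z)) (Heis (-z) 0 0)) (Heis 0 0 (-z))).
    { unfold heis_mul; simpl; f_equal; ring. }
    assert (Hcz : N (Heis 0 (z*z) 0) = INR n * INR n).
    { unfold N, e. change (Heis 0 0 0) with (center_elt 0).
      change (Heis 0 (z*z) 0) with (center_elt (z*z)). rewrite Hc.
      replace (0 - z*z)%Z with (- (z*z))%Z by ring. rewrite opp_IZR, Rabs_Ropp, Rabs_right.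
      - rewrite mult_IZR. unfold z. rewrite <- INR_IZR_INZ. reflexivity.
      - apply Rle_ge, IZR_le. nia. }
    assert (H1 := Xpow n). assert (H2 := Ypow n).
    assert (H3 : N (Heis (-z) 0 0) = N (Heis z 0 0)).
    { apply Ninv. unfold heis_mul, e; simpl; f_equal; ring. }
    assert (H4 : N (Heis 0 0 (-z)) = N (Heis 0 0 z)).
    { apply Ninv. unfold heis_mul, e; simpl; f_equal; ring. }
    rewrite <- Hcz, Hcomm.
    pose proof (Nmul (heis_mul (heis_mul (Heis z 0 0) (Heis 0 0 z)) (Heis (-z) 0 0)) (Heis 0 0 (-z))).
    pose proof (Nmul (heis_mul (Heis z 0 0) (Heis 0 0 z)) (Heis (-z) 0 0)).
    pose proof (Nmul (Heis z 0 0) (Heis 0 0 z)).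
    fold A B in H1, H2. unfold z in *. lra. }
  destruct (archimed (2 * (A + B))) as [Hup _].
  set (m := Z.to_nat (up (2 * (A + B)))).
  assert (Hm : 2 * (A + B) < INR (S m)).
  { rewrite S_INR. unfold m. rewrite INR_IZR_INZ.
    destruct (Z_lt_le_dec (up (2*(A+B))) 0) as [Hn|Hn].
    - replace (Z.to_nat (up (2*(A+B)))) with 0%nat by lia. simpl.
      apply Rlt_trans with (IZR (up (2*(A+B)))); auto.
      apply IZR_lt in Hn. lra.
    - rewrite Z2Nat.id by lia. lra. }
  specialize (key (S m)).
  assert (0 < INR (S m)) by (apply lt_0_INR; lia).
  assert (INR (S m) <= 2 * (A + B)).
  { apply Rmult_le_reg_l with (INR (S m)); auto. lra. }
  lra.
Qed.
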